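(* For any $\alpha\in(0,1/2)$ and any (possibly $K$-dependent) integer $t$ with $0\le t\le K^{1+\alpha}$, \[ \frac{C_t-\widetilde C_t}{K}\to0\quad\text{in probability as }K\to\infty. \]
   Context: Incremental construction. Fix an integer $K\ge2$, $[n]=\{1,\dots,n\}$. A random $K\times K$ matrix $\Psi$ is filled with $1,\dots,K^2$, the integer $s$ placed at step $s$. After step $t$, $R_t$, $C_t$ are the numbers of nonempty rows and columns (nonempty rows are $1,\dots,R_t$, nonempty columns $1,\dots,C_t$), and $M_t$ is the submatrix with rows $[R_t]$, columns $[C_t]$; $R_0=C_0=0$. Step 1: $\Psi(1,1)=1$ ($R_1=C_1=1$), counted as creating a new row and a new column. For $t=1,\dots,K^2-1$, step $t+1$: with conditional probability $\rho_{t+1}=\frac{(K-R_t)K}{K^2-t}$ a new row is created ($R_{t+1}=R_t+1$), and independently with probability $\frac{K-C_t}{K}$ also a new column ($C_{t+1}=C_t+1$, $\Psi(R_{t+1},C_{t+1})=t+1$), otherwise $C_{t+1}=C_t$ and $\Psi(R_{t+1},Z)=t+1$ with $Z$ uniform in $[C_t]$. With probability $1-\rho_{t+1}$, no new row is created ($R_{t+1}=R_t$) and a uniformly random empty cell $(X,Y)$ among rows $[R_t]$ is chosen by rejection sampling: cells are drawn independently and uniformly among the $R_tK$ cells of rows $[R_t]$ until an empty one is drawn; $U_{t+1}=1$ if the first draw is empty, $U_{t+1}=0$ otherwise. If $Y>C_t$ then $C_{t+1}=C_t+1$ and $\Psi(X,C_{t+1})=t+1$; otherwise $C_{t+1}=C_t$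 and $\Psi(X,Y)=t+1$. Define $\widetilde C_0=0$ and, for $s\ge1$: $\widetilde C_s-\widetilde C_{s-1}=C_s-C_{s-1}$, except at steps $s$ where no new row is created and $U_s=0$, where $\widetilde C_s=\widetilde C_{s-1}$. *)

(* Defs.v *)
From HB Require Import structures.
From mathcomp Require Import all_boot all_order all_algebra.
From mathcomp Require Import all_classical all_reals all_analysis.
Set Implicit Arguments. Unset Strict Implicit. Unset Printing Implicit Defensive.
Import Order.TTheory GRing.Theory Num.Theory.
Local Open Scope ring_scope.

(* Finitely supported (sub)probability distributions as weighted lists. *)
Definition dist (R : realType) (T : Type) := seq (R * T).

Definition dret (R : realType) (T : Type) (x : T) : dist R T := [:: (1, x)].

Definition dbind (R : realType) (A B : Type) (d : dist R A) (f : A -> dist R B)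
  : dist R B :=
  flatten [seq [seq (px.1 * qy.1, qy.2) | qy <- f px.2] | px <- d].

Definition dbern (R : realType) (p : R) : dist R bool := [:: (p, true); (1 - p, false)].

Definition dunif (R : realType) (T : Type) (l : seq T) : dist R T :=
  [seq ((size l)%:R^-1, x) | x <- l].

Definition prob (R : realType) (T : Type) (d : dist R T) (P : T -> bool) : R :=
  \sum_(px <- d | P px.2) px.1.

(* State of the construction after some step.  Indices are 0-based:
   paper row i / column j  <->  index i-1 / j-1.  Psi i j = 0 means empty. *)
Record state := mkState {
  Psi : nat -> nat -> nat;   (* the partially filled K x K matrix *)
  Rr  : nat;
  Cc  : nat;                 (* C_t *)
  Ct  : nat                  (* \widetilde C_t *)
}.

Definition setPsi (P : nat -> nat -> nat) (i j v : nat) : nat -> nat -> nat :=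
  fun a b => if (a == i) && (b == j) then v else P a b.

Definition state0 : state := mkState (fun _ _ => 0%N) 0 0 0.
Definition state1 : state := mkState (setPsi (fun _ _ => 0%N) 0 0 1) 1 1 1.

(* Step t+1 (t >= 1), from the state x after step t. *)
Definition step (R : realType) (K t : nat) (x : state) : dist R state :=
  let s := t.+1 in
  let P := Psi x in let r := Rr x in let c := Cc x in let ct := Ct x in
  let rho : R := ((K - r) * K)%N%:R / (K * K - t)%N%:R in
  dbind (dbern rho) (fun newrow =>
  if newrow then
    dbind (dbern ((K - c)%N%:R / K%:R)) (fun newcol =>
      if newcol then dret R (mkState (setPsi P r c s) r.+1 c.+1 ct.+1)
      else dbind (dunif R (iota 0 c)) (fun z =>
             dret R (mkState (setPsi P r z s) r.+1 c ct)))
  else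
    (* rejection sampling among the r*K cells of rows [r]: the first draw
       decides U; the accepted cell is uniform among the empty cells *)
    let cells := [seq (i, j) | i <- iota 0 r, j <- iota 0 K] in
    let empty (ij : nat * nat) := P ij.1 ij.2 == 0%N in
    dbind (dunif R cells) (fun first =>
      let U := empty first in
      dbind (if U then dret R first else dunif R (seq.filter empty cells)) (fun XY =>
        let X := XY.1 in let Y := XY.2 in
        if (c <= Y)%N then (* Y > C_t in 1-based indexing: new column C_t+1 *)
          dret R (mkState (setPsi P X c s) r c.+1 (if U then ct.+1 else ct))
        else dret R (mkState (setPsi P X Y s) r c ct)))).

Fixpoint law (R : realType) (K t : nat) : dist R state :=
  match t with
  | 0 => dret R state0
  | 1 => dret R state1
  | t'.+1 => dbind (law R K t') (step R K t')
  end.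

(* Main.v *)
Require Import Defs.
From HB Require Import structures.
From mathcomp Require Import all_boot all_order all_algebra.
From mathcomp Require Import all_classical all_reals all_analysis.
From mathcomp Require Import lra zify ring.
Import Order.TTheory GRing.Theory Num.Theory numFieldNormedType.Exports.
Set Implicit Arguments. Unset Strict Implicit. Unset Printing Implicit Defensive.
Local Open Scope classical_set_scope.
Local Open Scope ring_scope.
Definition Ex (R : realType) (T : Type) (d : dist R T) (f : T -> R) : R :=
  \sum_(p <- d) p.1 * f p.2.

Definition Good (R : realType) (T : Type) (P : T -> Prop) (d : dist R T) :=
  forall p, List.In p d -> 0 <= p.1 /\ (p.1 != 0 -> P p.2).

Lemma In_cat (A : Type) (p : A) s1 s2 : List.In p (s1 ++ s2) -> List.In p s1 \/ List.In p s2.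
Proof.
elim: s1 => [|a s1 IH] /=; first by right.
case=> [->|/IH [H|H]]; [left; left | left; right | right] => //.
Qed.

Lemma In_map (A B : Type) (f : A -> B) q s : List.In q (map f s) -> exists a, List.In a s /\ q = f a.
Proof.
elim: s => [|a s IH] //=.
case=> [<-|/IH [b [H1 H2]]]; [exists a; split; [left|] | exists b; split; [right|]] => //.
Qed.

Lemma In_dbind (R : realType) A B (d : dist R A) (g : A -> dist R B) p :
  List.In p (dbind d g) -> exists a b, List.In a d /\ List.In b (g a.2) /\ p = (a.1 * b.1, b.2).
Proof.
elim: d => [|a d IH] //=.
rewrite /dbind /= => H; case: (In_cat H) => H1.
- have [b [Hb ->]] := In_map H1.
  by exists a, b; split; [left|].
- have [a' [b [H2 [H3 ->]]]] := IH H1.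
  by exists a', b; split; [right|].
Qed.

Lemma Ex_cat (R : realType) T (d1 d2 : dist R T) f : Ex (d1 ++ d2) f = Ex d1 f + Ex d2 f.
Proof. by rewrite /Ex big_cat. Qed.

Lemma Ex_dbind (R : realType) A B (d : dist R A) (g : A -> dist R B) f :
  Ex (dbind d g) f = Ex d (fun a => Ex (g a) f).
Proof.
elim: d => [|p d IH]; first by rewrite /Ex /dbind !big_nil.
rewrite /dbind /= Ex_cat -/(dbind d g) IH /Ex big_cons; congr (_ + _).
rewrite big_map big_distrr /=; apply: eq_bigr => q _; by rewrite mulrA.
Qed.

Lemma Ex_dret (R : realType) T (x : T) f : Ex (dret R x) f = f x.
Proof. by rewrite /Ex /dret big_cons big_nil mul1r addr0. Qed.

Lemma Ex_dbern (R : realType) (p : R) f : Ex (dbern p) f = p * f true + (1 - p) * f false.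
Proof. by rewrite /Ex /dbern !big_cons big_nil addr0. Qed.

Lemma Ex_dunif (R : realType) T (l : seq T) f :
  Ex (dunif R l) f = (size l)%:R^-1 * \sum_(a <- l) f a.
Proof. by rewrite /Ex /dunif big_map big_distrr. Qed.

Lemma sum_le_In (R : realType) T (F G : T -> R) (s : seq T) :
  (forall x, List.In x s -> F x <= G x) -> \sum_(x <- s) F x <= \sum_(x <- s) G x.
Proof.
elim: s => [|a s IH] H; first by rewrite !big_nil.
rewrite !big_cons lerD //; first by apply: H; left.
by apply: IH => x Hx; apply: H; right.
Qed.

Lemma Ex_le_Good (R : realType) T (P : T -> Prop) (d : dist R T) f h :
  Good P d -> (forall x, P x -> f x <= h x) -> Ex d f <= Ex d h.
Proof.
move=> G H; apply: sum_le_In => p /G [H0 H1].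
have [->|Hn] := eqVneq p.1 0; first by rewrite !mul0r.
by apply: ler_wpM2l => //; apply: H; apply: H1.
Qed.

Lemma Ex_add (R : realType) T (d : dist R T) f k :
  Ex d (fun x => f x + k) = Ex d f + Ex d (fun _ => 1) * k.
Proof.
rewrite /Ex big_distrl -big_split /=; apply: eq_bigr => p _; by rewrite mulrDr mulr1.
Qed.

Lemma Ex_const (R : realType) T (d : dist R T) k :
  Ex d (fun _ => k) = Ex d (fun _ => 1) * k.
Proof. by rewrite /Ex big_distrl /=; apply: eq_bigr => p _; rewrite mulr1. Qed.

Lemma Ex_divr (R : realType) T (d : dist R T) f c :
  Ex d (fun x => f x / c) = Ex d f / c.
Proof. by rewrite /Ex big_distrl /=; apply: eq_bigr => p _; rewrite mulrA. Qed.


Lemma Ex_bound (R : realType) T (P : T -> Prop) (d : dist R T) f a :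
  Good P d -> Ex d (fun _ => 1) <= 1 -> 0 <= a -> (forall x, P x -> f x <= a) -> Ex d f <= a.
Proof.
move=> G Hm Ha H; apply: (le_trans (Ex_le_Good G H)).
by rewrite Ex_const ler_piMl.
Qed.

Lemma prob_Ex (R : realType) T (d : dist R T) (P : T -> bool) :
  prob d P = Ex d (fun x => (P x)%:R).
Proof.
rewrite /prob /Ex big_mkcond /=; apply: eq_bigr => p _.
by case: (P p.2); rewrite ?mulr1 ?mulr0.
Qed.

Lemma Good_impl (R : realType) T (P Q : T -> Prop) (d : dist R T) :
  Good P d -> (forall x, P x -> Q x) -> Good Q d.
Proof. by move=> G H p /G [H0 H1]; split => // /H1 /H. Qed.

Lemma Good_dret (R : realType) T (P : T -> Prop) (x : T) : P x -> Good P (dret R x).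
Proof. by move=> H p [<-|] //=; split => //; lra. Qed.

Lemma Good_dbind (R : realType) A B (P : B -> Prop) (d : dist R A) (g : A -> dist R B) :
  Good (fun a => Good P (g a)) d -> Good P (dbind d g).
Proof.
move=> G p /In_dbind [a [b [Ha [Hb ->]]]] /=.
have [H0 H1] := G a Ha.
have [->|Hn] := eqVneq a.1 0; first by rewrite mul0r eqxx; split.
have [H2 H3] := H1 Hn b Hb.
split; first exact: mulr_ge0.
by rewrite mulf_eq0 negb_or => /andP [_ /H3].
Qed.

Lemma Good_dbern (R : realType) (P : bool -> Prop) (p : R) :
  0 <= p <= 1 -> (p != 0 -> P true) -> (1 - p != 0 -> P false) -> Good P (dbern p).
Proof.
move=> /andP [H0 H1] Ht Hf q [<-|[<-|]] //=; split => //; lra.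
Qed.

Lemma Good_dunif (R : realType) T (P : T -> Prop) (l : seq T) :
  (forall a, List.In a l -> P a) -> Good P (dunif R l).
Proof.
move=> H q Hq; have [a [Ha ->]] := In_map Hq; split; first by rewrite invr_ge0.
by move=> _; apply: H.
Qed.

Lemma Good_true (R : realType) T (d : dist R T) (P : T -> Prop) :
  Good (fun _ => True) d -> (forall x, P x) -> Good P d.
Proof. by move=> G H; apply: (Good_impl G). Qed.

Lemma sum_const_seq (R : realType) T (l : seq T) (k : R) :
  \sum_(a <- l) k = (size l)%:R * k.
Proof.
elim: l => [|a l IH]; first by rewrite big_nil mul0r.
by rewrite big_cons IH /= -addn1 natrD; ring.
Qed.

Lemma mass_dunif (R : realType) T (l : seq T) : Ex (dunif R l) (fun _ => 1) <= 1.
Proof.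
rewrite Ex_dunif sum_const_seq mulr1.
have [->|Hn] := eqVneq (size l) 0%N; first by rewrite invr0 mul0r.
by rewrite mulVf // pnatr_eq0.
Qed.

Lemma mass_dbern (R : realType) (p : R) : Ex (dbern p) (fun _ => 1) = 1.
Proof. by rewrite Ex_dbern; ring. Qed.
Definition D (R : realType) (x : state) : R := `|(Cc x)%:R - (Ct x)%:R|.
Definition cells (r K : nat) := [seq (i, j) | i <- iota 0 r, j <- iota 0 K].
Definition NE (K : nat) (x : state) (B : nat) :=
  count (fun ij : nat * nat => Psi x ij.1 ij.2 != 0%N) (cells B K).
Definition Inv (K t : nat) (x : state) :=
  (t <= Rr x * K)%N /\ forall B, (NE K x B <= t)%N.

Lemma count_le_add T (p q r : pred T) s :
  (forall a, p a <= q a + r a)%N -> (count p s <= count q s + count r s)%N.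
Proof.
move=> H; elim: s => [|a s IH] //=.
have := H a; lia.
Qed.

Lemma uniq_cells r K : uniq (cells r K).
Proof.
rewrite /cells allpairs_uniq ?iota_uniq //.
by move=> [a b] [c d] _ _ /=.
Qed.

Lemma NE_setPsi K x i j v r' c' ct' B :
  (NE K (mkState (setPsi (Psi x) i j v) r' c' ct') B <= NE K x B + 1)%N.
Proof.
rewrite /NE /=.
apply: (leq_trans (count_le_add _ (q := fun ij : nat * nat => Psi x ij.1 ij.2 != 0%N) (r := pred1 (i, j)) _)).
  move=> [a b] /=; rewrite /setPsi /=.
  case: (a =P i) => [->|] /=; case: (b =P j) => [->|] //=; rewrite ?eqxx //=;
   try (move=> *; apply: leq_addr).
  by apply: (leq_trans (leq_b1 _)); rewrite leq_addl.
by rewrite leq_add2l count_uniq_mem ?uniq_cells // leq_b1.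
Qed.


Lemma sum_count (R : realType) T (p : pred T) (l : seq T) :
  \sum_(a <- l) ((p a)%:R : R) = (count p l)%:R.
Proof.
elim: l => [|a l IH]; first by rewrite big_nil.
by rewrite big_cons IH /= natrD.
Qed.

Lemma size_cells r K : size (cells r K) = (r * K)%N.
Proof. by rewrite /cells size_allpairs !size_iota. Qed.

Lemma aux_field (R : realType) (u T KK : R) : 0 < u -> 0 < KK - T ->
  (1 - (KK - u) / (KK - T)) * (T / u) = ((u - T) / u) * (T / (KK - T)).
Proof. by move=> u0 d0; field; rewrite !gt_eqF. Qed.

Lemma rho_bound (R : realType) K t r : (1 <= K)%N -> (1 <= t)%N -> (t < K * K)%N ->
  (t <= r * K)%N ->
  (1 - ((K - r) * K)%:R / (K * K - t)%:R) * (t%:R / (r * K)%:R) <= t%:R / (K * K - t)%:R :> R.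
Proof.
move=> K1 t1 tK trK.
have d0 : 0 < (K * K - t)%:R :> R by rewrite ltr0n subn_gt0.
have u0 : 0 < (r * K)%:R :> R by rewrite ltr0n; lia.
have T0 : 0 <= t%:R :> R by [].
case: (leqP r K) => rK.
- have -> : ((K - r) * K = K * K - r * K)%N by rewrite mulnBl.
  rewrite natrB ?leq_mul2r ?rK ?orbT //.
  move: d0; rewrite natrB ?(ltnW tK) // => d0.
  move: u0 T0 d0; set u := (r * K)%:R; set T := t%:R; set KK := (K * K)%:R => u0 T0 d0.
  rewrite aux_field //.
  apply: ler_piMl; first by rewrite divr_ge0 // ltW.
  by rewrite ler_pdivrMr // mul1r; lra.
- have -> : (K - r)%N = 0%N by apply/eqP; rewrite subn_eq0 ltnW.
  rewrite mul0n mul0r subr0 mul1r.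
  apply: ler_wpM2l => //.
  rewrite lef_pV2 ?posrE // ler_nat.
  apply: (leq_trans (leq_subr _ _)); rewrite leq_mul2r; apply/orP; right; exact: ltnW.
Qed.

Lemma rho_le1 (R : realType) K t r : (1 <= t)%N -> (t < K * K)%N -> (t <= r * K)%N ->
  0 <= (((K - r) * K)%:R / (K * K - t)%:R : R) <= 1.
Proof.
move=> t1 tK trK; apply/andP; split; first by rewrite divr_ge0.
rewrite ler_pdivrMr ?ltr0n ?subn_gt0 // mul1r ler_nat.
rewrite mulnBl; lia.
Qed.

Lemma norow_Ex (R : realType) K t x (f : state -> R) a b :
  (1 <= t)%N -> Inv K t x -> 0 <= a -> 0 <= b ->
  (forall i j r', f (mkState (setPsi (Psi x) i j t.+1) r' (Cc x) (Ct x)) <= a) ->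
  (forall i j r', f (mkState (setPsi (Psi x) i j t.+1) r' (Cc x).+1 (Ct x).+1) <= a) ->
  (forall i j, f (mkState (setPsi (Psi x) i j t.+1) (Rr x) (Cc x).+1 (Ct x)) <= a + b) ->
  Ex (dbind (dunif R (cells (Rr x) K)) (fun first =>
     dbind (if Psi x first.1 first.2 == 0%N then dret R first
            else dunif R [seq ij <- cells (Rr x) K | Psi x ij.1 ij.2 == 0%N])
       (fun XY : nat * nat => if (Cc x <= XY.2)%N then
          dret R (mkState (setPsi (Psi x) XY.1 (Cc x) t.+1) (Rr x) (Cc x).+1
             (if Psi x first.1 first.2 == 0%N then (Ct x).+1 else Ct x))
        else dret R (mkState (setPsi (Psi x) XY.1 XY.2 t.+1) (Rr x) (Cc x) (Ct x))))) f
  <= a + b * (t%:R / (Rr x * K)%:R).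
Proof.
move=> t1 [Ir IN] a0 b0 H1 H2 H3.
rewrite Ex_dbind Ex_dunif.
apply: le_trans (ler_wpM2l _ (sum_le_In (G := fun first : nat * nat =>
   a + b * (~~ (Psi x first.1 first.2 == 0%N))%:R) _)) _.
- by rewrite invr_ge0.
- move=> first _; case: eqP => HU /=.
  + rewrite Ex_dbind Ex_dret mulr0 addr0.
    by case: ifP => _; rewrite Ex_dret; [apply: H2 | apply: H1].
  + rewrite Ex_dbind mulr1.
    apply: (Ex_bound (P := fun _ => True)).
    * by apply: Good_dunif.
    * exact: mass_dunif.
    * exact: addr_ge0.
    * move=> XY _; case: ifP => _; rewrite Ex_dret; first exact: H3.
      by apply: le_trans (H1 _ _ _) _; rewrite lerDl.
- rewrite big_split /= sum_const_seq -big_distrr /= sum_count size_cells.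
  have u0 : 0 < (Rr x * K)%:R :> R by rewrite ltr0n; lia.
  rewrite mulrDr mulrA mulVf ?gt_eqF // mul1r lerD2l.
  rewrite mulrCA ler_wpM2l // mulrC ler_wpM2r ?invr_ge0 // ler_nat.
  exact: (IN (Rr x)).
Qed.
Lemma q_bound (R : realType) K c : (1 <= K)%N -> 0 <= ((K - c)%:R / K%:R : R) <= 1.
Proof.
move=> K1; apply/andP; split; first by rewrite divr_ge0.
by rewrite ler_pdivrMr ?ltr0n // mul1r ler_nat leq_subr.
Qed.

Lemma dbern_bound (R : realType) (p : R) (F : bool -> R) a :
  0 <= p <= 1 -> F true <= a -> F false <= a -> Ex (dbern p) F <= a.
Proof.
move=> /andP [p0 p1] Ht Hf; rewrite Ex_dbern.
apply: le_trans (lerD (ler_wpM2l p0 Ht) (ler_wpM2l _ Hf)) _; first by lra.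
lra.
Qed.

Lemma step_Ex (R : realType) K t x (f : state -> R) a b :
  (1 <= K)%N -> (1 <= t)%N -> (t < K * K)%N -> Inv K t x -> 0 <= a -> 0 <= b ->
  (forall i j r', f (mkState (setPsi (Psi x) i j t.+1) r' (Cc x) (Ct x)) <= a) ->
  (forall i j r', f (mkState (setPsi (Psi x) i j t.+1) r' (Cc x).+1 (Ct x).+1) <= a) ->
  (forall i j, f (mkState (setPsi (Psi x) i j t.+1) (Rr x) (Cc x).+1 (Ct x)) <= a + b) ->
  Ex (step R K t x) f <= a + b * (t%:R / (K * K - t)%N%:R).
Proof.
move=> K1 t1 tK [Ir IN] a0 b0 H1 H2 H3.
have E2 := @norow_Ex R K t x f a b t1 (conj Ir IN) a0 b0 H1 H2 H3.
rewrite /step /= Ex_dbind Ex_dbern.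
have /andP [r0 r1] := @rho_le1 R K t (Rr x) t1 tK Ir.
apply: le_trans (lerD (ler_wpM2l r0 (_ : _ <= a)) (ler_wpM2l _ E2)) _.
- rewrite Ex_dbind; apply: dbern_bound; first exact: q_bound.
  + by rewrite Ex_dret.
  + rewrite Ex_dbind; apply: (Ex_bound (P := fun _ => True)) => //.
    * by apply: Good_dunif.
    * exact: mass_dunif.
    * by move=> z _; rewrite Ex_dret.
- lra.
- have := @rho_bound R K t (Rr x) K1 t1 tK Ir.
  set rho := (_ / _ : R); set X := (_ / _ : R); set Y := (_ / _ : R) => HX.
  have -> : rho * a + (1 - rho) * (a + b * X) = a + b * ((1 - rho) * X) by ring.
  by rewrite lerD2l ler_wpM2l.
Qed.
Lemma Inv_set K t x i j v r' c' ct' :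
  Inv K t x -> (t.+1 <= r' * K)%N -> Inv K t.+1 (mkState (setPsi (Psi x) i j v) r' c' ct').
Proof.
move=> [Ir IN] H; split => // B.
by apply: (leq_trans (NE_setPsi _ _ _ _ _ _ _ _ _)); rewrite addn1 ltnS.
Qed.

Lemma step_good (R : realType) K t x :
  (1 <= K)%N -> (1 <= t)%N -> (t < K * K)%N -> Inv K t x -> Good (Inv K t.+1) (step R K t x).
Proof.
move=> K1 t1 tK Hinv.
have [Ir IN] := Hinv.
have Hs : (t.+1 <= (Rr x).+1 * K)%N by rewrite mulSn; lia.
rewrite /step /=; apply: Good_dbind; apply: Good_dbern.
- exact: rho_le1.
- move=> _; apply: Good_dbind; apply: Good_dbern; first exact: q_bound.
  + by move=> _; apply: Good_dret; apply: Inv_set.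
  + move=> _; apply: Good_dbind; apply: Good_dunif => z _; apply: Good_dret.
    exact: Inv_set.
- move=> Hr.
  have tr : (t < Rr x * K)%N.
    rewrite ltn_neqAle Ir andbT; apply/eqP => Et; move: Hr.
    rewrite (_ : ((K - Rr x) * K)%N = (K * K - t)%N); last by rewrite Et mulnBl.
    by rewrite divff ?subrr ?eqxx // pnatr_eq0 -lt0n subn_gt0.
  apply: Good_dbind; apply: Good_dunif => first _.
  apply: Good_dbind.
  case: (Psi x first.1 first.2 == 0%N).
  + apply: Good_dret; case: ifP => _; apply: Good_dret; exact: Inv_set.
  + apply: Good_dunif => XY _; case: ifP => _; apply: Good_dret; exact: Inv_set.
Qed.
Lemma step_mass (R : realType) K t x :
  (1 <= K)%N -> (1 <= t)%N -> (t < K * K)%N -> Inv K t x ->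
  Ex (step R K t x) (fun _ => 1) <= 1.
Proof.
move=> K1 t1 tK Hi.
have H := @step_Ex R K t x (fun _ => 1) 1 0 K1 t1 tK Hi ler01 (lexx 0).
rewrite mul0r addr0 in H.
apply: H; by move=> *; rewrite ?addr0.
Qed.

Lemma step_D (R : realType) K t x :
  (1 <= K)%N -> (1 <= t)%N -> (t < K * K)%N -> Inv K t x ->
  Ex (step R K t x) (@D R) <= D R x + t%:R / (K * K - t)%N%:R.
Proof.
move=> K1 t1 tK Hi.
have H := @step_Ex R K t x (@D R) (D R x) 1 K1 t1 tK Hi (normr_ge0 _) ler01.
rewrite mul1r in H.
apply: H.
- by move=> i j r'; rewrite /D /=.
- move=> i j r'; rewrite /D /=.
  have -> : ((Cc x).+1%:R - (Ct x).+1%:R : R) = (Cc x)%:R - (Ct x)%:R.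
    by rewrite -!natr1; ring.
  exact: lexx.
- move=> i j; rewrite /D /=.
  have -> : ((Cc x).+1%:R - (Ct x)%:R : R) = ((Cc x)%:R - (Ct x)%:R) + 1.
    by rewrite -!natr1; ring.
  by apply: le_trans (ler_normD _ _) _; rewrite normr1.
Qed.
Lemma Inv_state1 K : (1 <= K)%N -> Inv K 1 state1.
Proof.
move=> K1; split => //= [|B]; first by rewrite mul1n.
have := @NE_setPsi K (mkState (fun _ _ => 0%N) 0 0 0) 0 0 1 1 1 1 B.
rewrite /NE /= => H; apply: (leq_trans H); rewrite addn1 ltnS leqn0; apply/eqP.
by elim: (cells B K).
Qed.

Lemma law_main (R : realType) K T : (1 <= K)%N -> (1 <= T)%N -> (T < K * K)%N ->
  Good (Inv K T) (law R K T) /\ Ex (law R K T) (fun _ => 1) <= 1 /\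
  Ex (law R K T) (@D R) <= T%:R ^+ 2 / (K * K - T)%N%:R.
Proof.
move=> K1; elim: T => [//|T IH] T1 TK.
case: T IH T1 TK => [|T] IH T1 TK.
- split; [|split].
  + by apply: Good_dret; apply: Inv_state1.
  + by rewrite /= Ex_dret.
  + by rewrite /= Ex_dret /D /= subrr normr0 divr_ge0.
- have [G [M E]] := IH isT (ltnW TK).
  have -> : law R K T.+2 = dbind (law R K T.+1) (step R K T.+1) by [].
  split; [|split].
  + apply: Good_dbind; apply: (Good_impl G) => y Hy; apply: step_good => //; exact: ltnW.
  + rewrite Ex_dbind; apply: le_trans M.
    apply: (Ex_le_Good G) => y Hy; apply: step_mass => //; exact: ltnW.
  + rewrite Ex_dbind.
    apply: le_trans (Ex_le_Good (h := fun y => D R y + T.+1%:R / (K * K - T.+1)%N%:R) G _) _.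
      by move=> y Hy; apply: step_D => //; exact: ltnW.
    rewrite Ex_add.
    have d0 : 0 < (K * K - T.+2)%N%:R :> R by rewrite ltr0n subn_gt0.
    have d1 : 0 < (K * K - T.+1)%N%:R :> R by rewrite ltr0n subn_gt0 ltnW.
    apply: le_trans (lerD E (ler_piMl _ M)) _; first by rewrite divr_ge0 // ltW.
    rewrite -mulrDl; apply: ler_pM.
    * by rewrite addr_ge0 // ?exprn_ge0.
    * by rewrite invr_ge0 ltW.
    * rewrite -!natr1 expr2; set u := T%:R : R.
      have : 0 <= u by [].
      nra.
    * rewrite lef_pV2 ?posrE // ler_nat; lia.
Qed.
Lemma prob_bound (R : realType) K T (eps : R) : (1 <= K)%N -> (T < K * K)%N -> 0 < eps ->
  0 <= prob (law R K T) (fun x => eps * K%:R < `| (Cc x)%:R - (Ct x)%:R |) /\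
  prob (law R K T) (fun x => eps * K%:R < `| (Cc x)%:R - (Ct x)%:R |)
    <= (T%:R ^+ 2 / (K * K - T)%N%:R) / (eps * K%:R).
Proof.
move=> K1 TK e0.
have eK : 0 < eps * K%:R by rewrite mulr_gt0 // ltr0n.
have d0 : 0 < (K * K - T)%N%:R :> R by rewrite ltr0n subn_gt0.
case: T TK d0 => [|T] TK d0.
  rewrite prob_Ex /= Ex_dret /= subrr normr0 ltNge (ltW eK) /=.
  by split => //; rewrite !divr_ge0 ?exprn_ge0 // ltW.
have [G [M E]] := @law_main R K T.+1 K1 isT TK.
rewrite prob_Ex; split.
  rewrite -(mulr0 (Ex (law R K T.+1) (fun _ => 1))) -Ex_const.
  by apply: (Ex_le_Good G) => y _; case: (_ < _).
apply: le_trans (Ex_le_Good (h := fun y => D R y / (eps * K%:R)) G _) _.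
  move=> y _; case: ltP => H /=.
  - by rewrite ler_pdivlMr // mul1r ltW.
  - by rewrite /D divr_ge0 ?normr_ge0 // ltW.
by rewrite Ex_divr ler_wpM2r // invr_ge0 ltW.
Qed.
Lemma pow_large (R : realType) (g c : R) : 0 < g ->
  exists N : nat, forall K : nat, (N <= K)%N -> c <= K%:R `^ g.
Proof.
move=> g0.
case: (lerP c 0) => c0.
  by exists 0%N => K _; apply: le_trans c0 (powR_ge0 _ _).
set y := c `^ g^-1.
exists (Num.trunc y).+1 => K HK.
have yK : y <= K%:R.
  by apply: le_trans (ltW (truncnS_gt y)) _; rewrite ler_nat.
have -> : c = y `^ g by rewrite /y -powRrM mulVf ?gt_eqF // powRr1 // ltW.
by apply: ge0_ler_powR => //; [exact: ltW | rewrite nnegrE powR_ge0 | rewrite nnegrE].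
Qed.

Theorem corollary6p4 (R : realType) (alpha : R) (t : nat -> nat) :
  0 < alpha < 2^-1 ->
  (forall K : nat, (2 <= K)%N -> (t K)%:R <= (K%:R : R) `^ (1 + alpha)) ->
  forall eps : R, 0 < eps ->
    (fun K : nat =>
       prob (law R K (t K))
         (fun x => eps * K%:R < `| (Cc x)%:R - (Ct x)%:R |)) @ \oo --> 0.
Proof.
move=> /andP [a0 a12] Ht eps e0.
apply/cvgr0Pnorm_le => e he.
have [N1 HN1] := @pow_large R (1 - alpha) 2 ltac:(lra).
have [N2 HN2] := @pow_large R (1 - 2 * alpha) (2 / (e * eps)) ltac:(lra).
exists (maxn 2 (maxn N1 N2)) => // K /= HK.
have K2 : (2 <= K)%N by move: HK; rewrite !geq_max => /and3P [].
have K1 : (1 <= K)%N by apply: leq_trans K2.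
have k0 : 0 < K%:R :> R by rewrite ltr0n.
have kn0 : K%:R != 0 :> R by rewrite gt_eqF.
have tP := Ht K K2.
have A2 := HN1 K ltac:(move: HK; rewrite !geq_max => /and3P []//).
have B2 := HN2 K ltac:(move: HK; rewrite !geq_max => /and3P []//).
have PA : K%:R `^ (1 + alpha) * K%:R `^ (1 - alpha) = K%:R ^+ 2 :> R.
  rewrite -powRD; last by rewrite kn0 implybT.
  rewrite (_ : 1 + alpha + (1 - alpha) = 2%:R); last by ring.
  by rewrite powR_mulrn // ltW.
have PB : (K%:R `^ (1 + alpha)) ^+ 2 * K%:R `^ (1 - 2 * alpha) = K%:R ^+ 3 :> R.
  rewrite -powR_mulrn ?powR_ge0 // -powRrM -powRD; last by rewrite kn0 implybT.
  rewrite (_ : (1 + alpha) * 2%:R + (1 - 2 * alpha) = 3%:R); last by ring.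
  by rewrite powR_mulrn // ltW.
move: tP A2 B2 PA PB.
set P := K%:R `^ (1 + alpha); set A := K%:R `^ (1 - alpha); set B := K%:R `^ (1 - 2 * alpha).
set T := (t K)%:R; set k := K%:R : R => tP A2 B2 PA PB.
have T0 : 0 <= T by [].
have P0 : 0 <= P by apply: powR_ge0.
have Thalf : T * 2 <= k ^+ 2.
  rewrite -PA; apply: le_trans (ler_wpM2l T0 A2) _.
  by apply: ler_wpM2r => //; apply: le_trans A2; lra.
have T2 : T ^+ 2 * 2 <= e * eps * k ^+ 3.
  have H1 : T ^+ 2 <= P ^+ 2 by rewrite !expr2; apply: ler_pM.
  have H2 := ler_wpM2l (exprn_ge0 2 P0) B2.
  rewrite PB in H2.
  have H3 : P ^+ 2 * 2 = (P ^+ 2 * (2 / (e * eps))) * (e * eps).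
    by field; rewrite ?gt_eqF.
  apply: le_trans (ler_wpM2r (_ : 0 <= 2) H1) _ => //.
  rewrite H3 [X in _ <= X]mulrC; apply: ler_wpM2r; first by rewrite mulr_ge0 // ltW.
  exact: H2.
have TK : (t K < K * K)%N.
  rewrite -(ltr_nat R) natrM -/T -/k.
  have : 0 < k ^+ 2 by rewrite exprn_gt0.
  rewrite expr2 in Thalf *; lra.
have [p0 p1] := prob_bound K1 TK e0.
rewrite (ger0_norm p0); apply: le_trans p1 _.
rewrite (natrB _ (ltnW TK)) natrM -/T -/k.
have den : k ^+ 2 / 2 <= k * k - T by rewrite expr2 in Thalf *; lra.
have den0 : 0 < k * k - T by apply: lt_le_trans den; rewrite divr_gt0 ?exprn_gt0.
rewrite ler_pdivrMr ?mulr_gt0 // ler_pdivrMr //.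
have H4 := ler_wpM2l (_ : 0 <= e * (eps * k)) den.
have : 0 <= e * (eps * k) by rewrite !mulr_ge0 // ltW.
move=> /H4 {}H4.
apply: le_trans H4.
rewrite (_ : e * (eps * k) * (k ^+ 2 / 2) = (e * eps * k ^+ 3) / 2); last by rewrite !exprS expr0; field.
lra.
Qed.
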